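(* Let $G=(V,E)$ be a connected, locally finite simple graph, let $x\in V$, let $u:V\to\mathbb{R}$ be harmonic, and let $0\le a\le b<\infty$ be integers. Define, for $k\ge 0$, $$N(k) = \sum_{y:\, d(x,y)=k+1} d_{\mathrm{in}}(y)\, u(y)^2 - \sum_{y:\, d(x,y)=k} d_{\mathrm{out}}(y)\, u(y)^2 .$$ If $G$ is locally expansive in $\{v\in V: a\le d(x,v)\le b\}$, i.e. $d_{\mathrm{out}}(v)\ge d_{\mathrm{in}}(v)$ for every $v$ with $a\le d(x,v)\le b$, then $$\sum_{y:\,d(x,y)=b+1} d_{\mathrm{in}}(y)\, u(y)^2 \ge (b-a+1)N(a) + \sum_{y:\,d(x,y)=a} d_{\mathrm{out}}(y)\, u(y)^2.$$ If $G$ is locally contractive in the same region, i.e. $d_{\mathrm{out}}(v)\le d_{\mathrm{in}}(v)$ for every $v$ with $a\le d(x,v)\le b$, then $$\sum_{y:\,d(x,y)=b+1} d_{\mathrm{in}}(y)\, u(y)^2 \le (b-a+1)N(b) + \sum_{y:\,d(x,y)=a} d_{\mathrm{out}}(y)\, u(y)^2.$$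
   Context: $d(\cdot,\cdot)$ is the graph distance. $u$ is harmonic if $\sum_{w:(v,w)\in E}(u(v)-u(w))=0$ for every $v\in V$. With $x$ fixed, $d_{\mathrm{in}}(v)=\#\{w: (w,v)\in E,\ d(w,x)=d(v,x)-1\}$ and $d_{\mathrm{out}}(v)=\#\{w: (w,v)\in E,\ d(w,x)=d(v,x)+1\}$. *)

(* Defs.v *)
From HB Require Import structures.
From mathcomp Require Import all_boot all_order all_algebra.
From mathcomp Require Import boolp classical_sets functions cardinality fsbigop reals.
Set Implicit Arguments. Unset Strict Implicit. Unset Printing Implicit Defensive.
Import Order.TTheory GRing.Theory Num.Theory.
Local Open Scope ring_scope.

(* A locally finite simple graph on a (possibly infinite) vertex type V is
   given by its finite neighbour lists [nb v]. *)
Definition adj (V : eqType) (nb : V -> seq V) : rel V := fun v w => w \in nb v.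

Definition simple_locfin_graph (V : eqType) (nb : V -> seq V) : Prop :=
  (forall v, uniq (nb v)) /\
  (forall v, v \notin nb v) /\
  (forall v w, (w \in nb v) = (v \in nb w)).

Definition walk (V : eqType) (nb : V -> seq V) (v w : V) (n : nat) : Prop :=
  exists p : seq V, [/\ path (adj nb) v p, last v p = w & size p = n].

Definition connected_graph (V : eqType) (nb : V -> seq V) : Prop :=
  forall v w, exists n, walk nb v w n.

Definition is_dist (V : eqType) (nb : V -> seq V) (v w : V) (k : nat) : Prop :=
  walk nb v w k /\ forall m, (m < k)%N -> ~ walk nb v w m.

Definition d_in (V : eqType) (nb : V -> seq V) (x v : V) : nat :=
  count (fun w => `[< exists k, is_dist nb x w k /\ is_dist nb x v k.+1 >]) (nb v).

Definition d_out (V : eqType) (nb : V -> seq V) (x v : V) : nat :=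
  count (fun w => `[< exists k, is_dist nb x v k /\ is_dist nb x w k.+1 >]) (nb v).

Definition harmonic (R : realType) (V : eqType) (nb : V -> seq V) (u : V -> R) : Prop :=
  forall v, \sum_(w <- nb v) (u v - u w) = 0.

Definition sphere (V : eqType) (nb : V -> seq V) (x : V) (k : nat) : set V :=
  [set y | is_dist nb x y k].

Definition in_energy (R : realType) (V : choiceType) (nb : V -> seq V) (x : V)
  (u : V -> R) (k : nat) : R :=
  \sum_(y \in sphere nb x k) ((d_in nb x y)%:R * u y ^+ 2).

Definition out_energy (R : realType) (V : choiceType) (nb : V -> seq V) (x : V)
  (u : V -> R) (k : nat) : R :=
  \sum_(y \in sphere nb x k) ((d_out nb x y)%:R * u y ^+ 2).

Definition Nfun (R : realType) (V : choiceType) (nb : V -> seq V) (x : V)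
  (u : V -> R) (k : nat) : R :=
  in_energy nb x u k.+1 - out_energy nb x u k.

(* Main.v *)
Require Import Defs.
From HB Require Import structures.
From mathcomp Require Import all_boot all_order all_algebra.
From mathcomp Require Import boolp classical_sets functions cardinality fsbigop reals.
From mathcomp Require Import ring lra zify.
Import Order.TTheory GRing.Theory Num.Theory.
Set Implicit Arguments. Unset Strict Implicit. Unset Printing Implicit Defensive.
Local Open Scope ring_scope.
Local Open Scope classical_set_scope.

Section G.
Variables (V : choiceType) (nb : V -> seq V) (x : V).
Hypothesis Hs : simple_locfin_graph nb.
Hypothesis Hc : connected_graph nb.

Lemma nb_sym v w : (w \in nb v) = (v \in nb w).
Proof. by case: Hs => _ [_ ->]. Qed.

Lemma walk0 v w : walk nb v w 0 <-> w = v.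
Proof.
split; first by case=> [[|? ?] [_ /= <- //]].
by move=> ->; exists [::].
Qed.

Lemma walk_ext v w z n : walk nb v w n -> z \in nb w -> walk nb v z n.+1.
Proof.
case=> p [hp hl hs] hz; exists (rcons p z); split.
- by rewrite rcons_path hp /= hl.
- by rewrite last_rcons.
- by rewrite size_rcons hs.
Qed.

Lemma walk_pred v z n : walk nb v z n.+1 -> exists w, walk nb v w n /\ z \in nb w.
Proof.
case=> p [hp hl hs]; move: hp hl hs; case/lastP: p => [//|q z'].
rewrite rcons_path last_rcons size_rcons => /andP[hq ha] hl [hs]; subst z'.
by exists (last v q); split => //; exists q.
Qed.

Lemma dist_uniq v k m : is_dist nb x v k -> is_dist nb x v m -> k = m.
Proof.
case=> hk1 hk2 [hm1 hm2]; case: (ltngtP k m) => // h.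
- by case: (hm2 _ h hk1).
- by case: (hk2 _ h hm1).
Qed.

Lemma walk_dist v n : walk nb x v n -> exists m, (m <= n)%N /\ is_dist nb x v m.
Proof.
move=> hw.
have ex : exists n, `[< walk nb x v n >] by exists n; apply/asboolP.
case: (ex_minnP ex) => m /asboolP hm hmin.
exists m; split; first by apply: hmin; apply/asboolP.
split => // j hj hwj.
have := hmin j (introT (asboolP _) hwj); rewrite leqNgt hj //.
Qed.

Lemma dist_ex v : exists m, is_dist nb x v m.
Proof. by case: (Hc x v) => n /walk_dist [m [_ h]]; exists m. Qed.

Lemma dist_lip v w k m : w \in nb v -> is_dist nb x v k -> is_dist nb x w m ->
  (m <= k.+1)%N.
Proof.
move=> hvw [hk _] [_ hm]; rewrite leqNgt; apply/negP => h.
exact: (hm _ h (walk_ext hk hvw)).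
Qed.

Lemma dist_pred z k : is_dist nb x z k.+1 ->
  exists w, is_dist nb x w k /\ z \in nb w.
Proof.
move=> hz; case: (hz) => hw _; case: (walk_pred hw) => w [hw' hzw].
case: (walk_dist hw') => m [hmk hm].
have : (k.+1 <= m.+1)%N.
  exact: (dist_lip hzw hm hz).
rewrite ltnS => hkm.
have -> : k = m by apply/eqP; rewrite eqn_leq hkm hmk.
by exists w.
Qed.

Fixpoint lev (k : nat) : seq V :=
  match k with
  | 0 => [:: x]
  | k'.+1 => undup [seq w <- flatten (map nb (lev k')) | `[< is_dist nb x w k'.+1 >]]
  end.

Lemma lev_uniq k : uniq (lev k).
Proof. by case: k => [|k] //=; exact: undup_uniq. Qed.

Lemma levP k w : (w \in lev k) <-> is_dist nb x w k.
Proof.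
elim: k w => [|k IH] w /=.
- rewrite inE; split.
  + by move/eqP => ->; split; [apply/walk0|].
  + by case=> /walk0 -> _.
- rewrite mem_undup mem_filter; split.
  + by case/andP => /asboolP.
  + move=> h; apply/andP; split; first by apply/asboolP.
    case: (dist_pred h) => y [hy hwy].
    by apply/flatten_mapP; exists y => //; apply/IH.
Qed.

Arguments lev : simpl never.

Lemma levE k m w : is_dist nb x w m -> (w \in lev k) = (k == m).
Proof.
move=> h; apply/idP/eqP.
- by move/levP => h'; exact: dist_uniq h' h.
- by move=> ->; apply/levP.
Qed.


Lemma conv (R : realType) (s t : seq V) (F : V -> R) : uniq s -> uniq t ->
  \sum_(w <- s | w \in t) F w = \sum_(w <- t | w \in s) F w.
Proof.
move=> us ut; rewrite -[LHS]big_filter -[RHS]big_filter; apply: perm_big.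
apply: uniq_perm; rewrite ?filter_uniq // => w.
by rewrite !mem_filter andbC.
Qed.

Variable R : realType.
Variable u : V -> R.
Hypothesis Hh : harmonic nb u.

Definition T i j (F : V -> V -> R) :=
  \sum_(v <- lev i) \sum_(w <- lev j | w \in nb v) F v w.

Lemma Tswap i j F : T i j F = T j i (fun v w => F w v).
Proof.
rewrite /T; under eq_bigr do rewrite big_mkcond.
rewrite exchange_big /=; apply: eq_bigr => w _.
rewrite [RHS]big_mkcond; apply: eq_bigr => v _; by rewrite nb_sym.
Qed.

Lemma TB i j F G : T i j F - T i j G = T i j (fun v w => F v w - G v w).
Proof. rewrite /T -sumrB; apply: eq_bigr => v _; by rewrite -sumrB. Qed.

Lemma TN i j F : T i j (fun v w => - F v w) = - T i j F.
Proof. rewrite /T -sumrN; apply: eq_bigr => v _; by rewrite -sumrN. Qed.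

Lemma fsE k (F : V -> R) : \sum_(y \in sphere nb x k) F y = \sum_(y <- lev k) F y.
Proof.
have -> : sphere nb x k = [set` lev k].
  by apply/seteqP; split => y /=; move/levP.
by rewrite -fsbig_seq // lev_uniq.
Qed.

Lemma nb_uniq v : uniq (nb v).
Proof. by case: Hs. Qed.

Lemma countE (P : pred V) s (c : R) : (count P s)%:R * c = \sum_(w <- s | P w) c.
Proof. rewrite -sum1_count natr_sum mulr_suml; apply: eq_bigr => _ _; by rewrite mul1r. Qed.

Lemma inE' k : in_energy nb x u k.+1 = T k.+1 k (fun v w => u v ^+ 2).
Proof.
rewrite /in_energy fsE /T; apply: eq_big_seq => y hy.
have hy' := (iffLR (levP _ _) hy).
rewrite /d_in (@eq_in_count _ _ (mem (lev k))); last first.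
  move=> w _; apply/asboolP/idP.
  - case=> k' [h1 h2]; have := dist_uniq h2 hy'; case=> <-; exact/levP.
  - by move/levP => h; exists k.
by rewrite countE conv ?nb_uniq ?lev_uniq.
Qed.

Lemma outE' k : out_energy nb x u k = T k.+1 k (fun v w => u w ^+ 2).
Proof.
rewrite -[RHS]Tswap /out_energy fsE /T; apply: eq_big_seq => y hy.
have hy' := (iffLR (levP _ _) hy).
rewrite /d_out (@eq_in_count _ _ (mem (lev k.+1))); last first.
  move=> w _; apply/asboolP/idP.
  - case=> k' [h1 h2]; have := dist_uniq h1 hy'; move=> ?; subst k'; exact/levP.
  - by move/levP => h; exists k.
by rewrite countE conv ?nb_uniq ?lev_uniq.
Qed.

Lemma NE k : Nfun nb x u k = T k.+1 k (fun v w => u v ^+ 2 - u w ^+ 2).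
Proof. by rewrite /Nfun inE' outE' TB. Qed.

Lemma split3 k v (F : V -> R) : v \in lev k.+1 ->
  \sum_(w <- nb v) F w = \sum_(w <- lev k.+2 | w \in nb v) F w +
    \sum_(w <- lev k.+1 | w \in nb v) F w + \sum_(w <- lev k | w \in nb v) F w.
Proof.
move=> /levP hv.
rewrite -(conv _ (nb_uniq v) (lev_uniq k.+2)) -(conv _ (nb_uniq v) (lev_uniq k.+1)).
rewrite -(conv _ (nb_uniq v) (lev_uniq k)).
rewrite (big_mkcond (fun w => w \in lev k.+2)) (big_mkcond (fun w => w \in lev k.+1)).
rewrite (big_mkcond (fun w => w \in lev k)).
rewrite -!big_split.
apply: eq_big_seq => w hw /=.
case: (dist_ex w) => m hm.
have h1 := dist_lip hw hv hm.
have h2 : (k.+1 <= m.+1)%N by apply: (dist_lip _ hm hv); rewrite -nb_sym.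
rewrite !(levE _ hm).
have : m = k \/ m = k.+1 \/ m = k.+2 by lia.
case=> [->|[->|->]].
- have e1 : (k.+2 == k) = false by lia.
  have e2 : (k.+1 == k) = false by lia.
  by rewrite e1 e2 eqxx !add0r.
- have e1 : (k.+2 == k.+1) = false by lia.
  have e2 : (k == k.+1) = false by lia.
  by rewrite e1 e2 eqxx add0r addr0.
- have e1 : (k.+1 == k.+2) = false by lia.
  have e2 : (k == k.+2) = false by lia.
  by rewrite e1 e2 eqxx !addr0.
Qed.

Lemma harm_ge0 v : 0 <= \sum_(w <- nb v) (u w ^+ 2 - u v ^+ 2).
Proof.
have e : forall w, u w ^+ 2 - u v ^+ 2 = (u w - u v) ^+ 2 - 2 * u v * (u v - u w).
  by move=> w; ring.
rewrite (eq_bigr _ (fun w _ => e w)) sumrB -mulr_sumr Hh mulr0 subr0.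
by apply: sumr_ge0 => w _; exact: sqr_ge0.
Qed.

Lemma N_step k : Nfun nb x u k <= Nfun nb x u k.+1.
Proof.
have hQ : 0 <= \sum_(v <- lev k.+1) \sum_(w <- nb v) (u w ^+ 2 - u v ^+ 2).
  by apply: sumr_ge0 => v _; exact: harm_ge0.
rewrite (eq_big_seq _ (fun v hv => split3 (fun w => u w ^+ 2 - u v ^+ 2) hv)) in hQ.
rewrite !big_split /= in hQ.
have E1 : T k.+1 k.+2 (fun v w => u w ^+ 2 - u v ^+ 2) = Nfun nb x u k.+1.
  by rewrite Tswap NE.
have E3 : T k.+1 k (fun v w => u w ^+ 2 - u v ^+ 2) = - Nfun nb x u k.
  rewrite NE -TN /T; apply: eq_bigr => v _; apply: eq_bigr => w _; by rewrite opprB.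
have E2 : T k.+1 k.+1 (fun v w => u w ^+ 2 - u v ^+ 2) = 0.
  set X := T _ _ _.
  have : X = - X.
    rewrite {1}/X Tswap -TN /X /T; apply: eq_bigr => v _; apply: eq_bigr => w _; by rewrite opprB.
  move=> h; lra.
rewrite /T in E1 E2 E3; rewrite E1 E2 E3 in hQ; lra.
Qed.

Lemma N_mono k m : (k <= m)%N -> Nfun nb x u k <= Nfun nb x u m.
Proof.
elim: m => [|m IH]; first by rewrite leqn0 => /eqP ->.
rewrite leq_eqVlt => /orP[/eqP -> //|]; rewrite ltnS => h.
exact: le_trans (IH h) (N_step m).
Qed.

Lemma io_le k : (forall v, is_dist nb x v k -> (d_in nb x v <= d_out nb x v)%N) ->
  in_energy nb x u k <= out_energy nb x u k.
Proof.
move=> H; rewrite /in_energy /out_energy !fsE !big_seq; apply: ler_sum => y hy.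
by apply: ler_wpM2r; [exact: sqr_ge0 | rewrite ler_nat; apply: H; apply/levP].
Qed.

Lemma oi_le k : (forall v, is_dist nb x v k -> (d_out nb x v <= d_in nb x v)%N) ->
  out_energy nb x u k <= in_energy nb x u k.
Proof.
move=> H; rewrite /in_energy /out_energy !fsE !big_seq; apply: ler_sum => y hy.
by apply: ler_wpM2r; [exact: sqr_ge0 | rewrite ler_nat; apply: H; apply/levP].
Qed.

End G.

Theorem corollary1 (R : realType) (V : choiceType) (nb : V -> seq V) (x : V)
  (u : V -> R) (a b : nat) :
  simple_locfin_graph nb -> connected_graph nb -> harmonic nb u ->
  (a <= b)%N ->
  ((forall v k, (a <= k <= b)%N -> is_dist nb x v k ->
      (d_in nb x v <= d_out nb x v)%N) ->
    in_energy nb x u b.+1 >=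
      (b - a + 1)%:R * Nfun nb x u a + out_energy nb x u a) /\
  ((forall v k, (a <= k <= b)%N -> is_dist nb x v k ->
      (d_out nb x v <= d_in nb x v)%N) ->
    in_energy nb x u b.+1 <=
      (b - a + 1)%:R * Nfun nb x u b + out_energy nb x u a).
Proof.
move=> Hs Hc Hh hab.
rewrite addn1; split => H.
- suff key : forall n, (a + n <= b)%N ->
    n.+1%:R * Nfun nb x u a + out_energy nb x u a <= in_energy nb x u (a + n).+1.
    by have := key (b - a)%N; rewrite subnKC // => /(_ (leqnn b)).
  elim=> [|n IH] hn.
  + by rewrite addn0 mul1r /Nfun; lra.
  + have h1 := IH (ltac:(lia) : (a + n <= b)%N).
    have h2 : in_energy nb x u (a + n).+1 <= out_energy nb x u (a + n).+1.
      apply: io_le => v hv; apply: (H v (a + n).+1) => //; lia.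
    have h3 := N_mono x Hs Hc Hh (ltac:(lia) : (a <= (a + n).+1)%N).
    have e : in_energy nb x u (a + n).+2 =
      Nfun nb x u (a + n).+1 + out_energy nb x u (a + n).+1 by rewrite /Nfun; ring.
    rewrite addnS e -[n.+2]addn1 natrD mulrDl mul1r.
    lra.
- suff key : forall n, (a + n <= b)%N ->
    in_energy nb x u (a + n).+1 <= n.+1%:R * Nfun nb x u (a + n) + out_energy nb x u a.
    by have := key (b - a)%N; rewrite subnKC // => /(_ (leqnn b)).
  elim=> [|n IH] hn.
  + by rewrite addn0 mul1r /Nfun; lra.
  + have h1 := IH (ltac:(lia) : (a + n <= b)%N).
    have h2 : out_energy nb x u (a + n).+1 <= in_energy nb x u (a + n).+1.
      apply: oi_le => v hv; apply: (H v (a + n).+1) => //; lia.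
    have h3 := N_mono x Hs Hc Hh (ltac:(lia) : (a + n <= (a + n).+1)%N).
    have e : in_energy nb x u (a + n).+2 =
      Nfun nb x u (a + n).+1 + out_energy nb x u (a + n).+1 by rewrite /Nfun; ring.
    have h4 : 0 <= n.+1%:R :> R by [].
    have h5 := ler_wpM2l h4 h3.
    rewrite addnS e -[n.+2]addn1 natrD mulrDl mul1r.
    lra.
Qed.
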